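(* Let $x\in\{0,1\}^\infty$ satisfy $\sigma^n(x)=x$ for some $n\ge1$, and let $X=\{\sigma^j(x):0\le j<n\}$ be its orbit. Then the hereditary closure $\tilde X$ of $X$ is a transitive sofic shift and \[\tilde X=\{y\in\{0,1\}^\infty: y\le\sigma^j(x)\text{ for some }0\le j<n\}.\] If moreover $\sigma(x)\ne x$, then $\tilde X$ is not topologically mixing.
   Context: On $\{0,1\}^\infty=\{0,1\}^{\mathbb N_0}$, $y\le x$ means $y_i\le x_i$ for all $i$. The hereditary closure of a shift space $X$ is $\tilde X=\{y\in\{0,1\}^\infty:\exists x\in X,\ y\le x\}$. A sofic shift is the set of label sequences of infinite paths in a finite edge-labelled directed graph. Transitive: for all words $u,w$ in the language there is $v$ with $uvw$ in the language; topologically mixing: for all $u,w$ there is $N$ such that for every $m\ge N$ some $v$ with $|v|=m$ has $uvw$ in the language. *)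

(* Defs.v *)
From mathcomp Require Import all_boot.
Set Implicit Arguments. Unset Strict Implicit. Unset Printing Implicit Defensive.

(* Points of {0,1}^N_0, with 0 = false, 1 = true. *)
Definition pt := nat -> bool.

Definition shift (x : pt) : pt := fun i => x i.+1.

Definition le01 (y x : pt) : Prop := forall i, (y i <= x i)%N.

Definition hered (X : pt -> Prop) : pt -> Prop :=
  fun y => exists x, X x /\ le01 y x.

(* Sofic shift: set of label sequences of infinite paths in a finite
   edge-labelled directed graph with vertex set 'I_nv and edge set 'I_ne
   (multi-edges allowed). *)
Definition sofic (S : pt -> Prop) : Prop :=
  exists (nv ne : nat) (src tgt : 'I_ne -> 'I_nv) (lab : 'I_ne -> bool),
    forall y, S y <->
      exists p : nat -> 'I_ne,
        (forall i, tgt (p i) = src (p i.+1)) /\ (forall i, y i = lab (p i)).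

Definition occurs (w : seq bool) (y : pt) : Prop :=
  exists k, forall i, i < size w -> y (k + i) = nth false w i.

Definition in_lang (S : pt -> Prop) (w : seq bool) : Prop :=
  exists y, S y /\ occurs w y.

Definition shift_transitive (S : pt -> Prop) : Prop :=
  forall u w, in_lang S u -> in_lang S w ->
    exists v, in_lang S (u ++ v ++ w).

Definition top_mixing (S : pt -> Prop) : Prop :=
  forall u w, in_lang S u -> in_lang S w ->
    exists N, forall m, N <= m ->
      exists v, size v = m /\ in_lang S (u ++ v ++ w).

(* Main.v *)
Require Import Defs.
From mathcomp Require Import all_boot.
From mathcomp Require Import zify.
From Stdlib Require Import FunctionalExtensionality.

Lemma iter_shift (x : pt) j i : iter j shift x i = x (j + i).
Proof.
elim: j i => [|j IH] i //=. rewrite /shift IH. f_equal; lia.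
Qed.

Section Per.
Variables (x : pt) (n : nat).
Hypothesis Hn : 0 < n.
Hypothesis Hp : iter n shift x = x.

Lemma per1 i : x (n + i) = x i.
Proof. by rewrite -iter_shift Hp. Qed.

Lemma perk k i : x (k * n + i) = x i.
Proof.
elim: k i => [|k IH] i //=. rewrite mulSn -addnA per1 IH //.
Qed.

Lemma permod i : x i = x (i %% n).
Proof. by rewrite {1}(divn_eq i n) perk. Qed.

Definition S c := \sum_(i < n) (x (c + i) : nat).

Lemma S_const c : S c = S 0.
Proof.
elim: c => [//|c IH]. rewrite -IH /S.
have En : n = n.-1.+1 by rewrite prednK.
move: (per1 c). rewrite En => P1.
rewrite big_ord_recr [RHS]big_ord_recl /= addnC. f_equal.
- have -> : c.+1 + n.-1 = n.-1.+1 + c by lia. by rewrite P1 addn0.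
- apply eq_bigr => i _. f_equal. by rewrite /bump /= add1n addnS.
Qed.

Lemma key c : (forall i, i < n -> x i <= x (c + i)) -> forall i, x (c + i) = x i.
Proof.
move=> H.
have Hi : forall i, i < n -> x (c + i) = x i.
  move=> i lin. move: (H i lin). case Ex: (x i); case Ec: (x (c + i)) => // _.
  exfalso.
  have : S 0 < S c.
    rewrite /S (bigD1 (Ordinal lin)) //= [X in _ < X](bigD1 (Ordinal lin)) //=.
    rewrite add0n Ex Ec -addSn. apply: leq_add => //. apply: leq_sum => k _. rewrite add0n. exact: H (ltn_ord k).
  by rewrite S_const ltnn.
move=> i. rewrite (permod (c + i)) -modnDmr -(permod (c + i %% n)) Hi ?ltn_mod //.
by rewrite -permod.
Qed.

Definition fits (u : seq bool) a := forall i, i < size u -> nth false u i <= x (a + i).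

End Per.
Lemma lang_fits (x : pt) (n : nat) u :
  in_lang (hered (fun y : pt => exists j, j < n /\ y = iter j shift x)) u ->
  exists a, fits x u a.
Proof.
move=> [y [[z [[j [jn ->]] Hle]] [k Hk]]].
exists (j + k) => i iu. rewrite -Hk //. have := Hle (k + i). by rewrite iter_shift addnA.
Qed.

Lemma fits_lang (x : pt) (n : nat) u a : 0 < n -> fits x u a ->
  in_lang (hered (fun y : pt => exists j, j < n /\ y = iter j shift x)) u.
Proof.
move=> Hn Hf.
exists (fun i => if (a <= i) && (i < a + size u) then nth false u (i - a) else false).
split.
- exists x; split; first by exists 0.
  move=> i /=. case: ifP => // /andP [h1 h2].
  have := Hf (i - a). rewrite subnKC //. apply. lia.
- exists a => i iu. have -> : (a <= a + i) && (a + i < a + size u).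
    apply/andP; split; lia.
  by rewrite addKn.
Qed.

Theorem mainTheorem16 (x : pt) (n : nat) :
  0 < n -> iter n shift x = x ->
  let X := fun y : pt => exists j, j < n /\ y = iter j shift x in
  [/\ sofic (hered X),
      shift_transitive (hered X),
      (forall y, hered X y <-> exists j, j < n /\ le01 y (iter j shift x)) &
      (shift x <> x -> ~ top_mixing (hered X))].
Proof.
move=> Hn Hp X.
have H3 : forall y, hered X y <-> exists j, j < n /\ le01 y (iter j shift x).
  move=> y; split.
  - by move=> [z [[j [jn ->]] Hle]]; exists j.
  - by move=> [j [jn Hle]]; exists (iter j shift x); split => //; exists j.
split => //.
-
  pose src (e : 'I_(n + n)) : 'I_n := Ordinal (ltn_pmod (val e) Hn).
  pose tgt (e : 'I_(n + n)) : 'I_n := Ordinal (ltn_pmod (val e %% n).+1 Hn).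
  pose lab (e : 'I_(n + n)) : bool := (val e < n) && x (val e).
  exists n, (n + n), src, tgt, lab => y. rewrite H3. split.
  + move=> [j [jn Hle]].
    have lt1 : forall i, (j + i) %% n < n + n.
      move=> i. apply: leq_trans (ltn_pmod _ Hn) _. exact: leq_addr.
    have lt2 : forall i, n + (j + i) %% n < n + n.
      move=> i. by rewrite ltn_add2l ltn_pmod.
    exists (fun i => if y i then Ordinal (lt1 i) else Ordinal (lt2 i)).
    have Hm : forall i, val (if y i then Ordinal (lt1 i) else Ordinal (lt2 i)) %% n
                         = (j + i) %% n.
      move=> i. case: (y i) => /=; first by rewrite modn_mod.
      by rewrite modnDl modn_mod.
    split.
    * move=> i. apply/val_inj => /=. rewrite !Hm.
      by rewrite -addn1 modnDml addn1 addnS.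
    * move=> i. rewrite /lab. case Ey: (y i) => /=.
      -- rewrite ltn_pmod //= -permod //.
         have := Hle i. by rewrite Ey iter_shift; case: (x (j + i)).
      -- by rewrite ltnNge leq_addr.
  + move=> [p [Hpath Hlab]].
    pose j := val (p 0) %% n.
    have Hm : forall i, val (p i) %% n = (j + i) %% n.
      elim => [|i IH]; first by rewrite addn0 modn_mod.
      have := congr1 val (Hpath i) => /= <-.
      by rewrite IH -addn1 modnDml addn1 addnS.
    exists j; split; first exact: ltn_pmod.
    move=> i. rewrite Hlab iter_shift /lab.
    case: ltnP => //= lt. rewrite (@permod _ _ Hp (j + i)) -Hm modn_small //.
-
  move=> u w /lang_fits [a Ha] /lang_fits [b Hb].
  set P := a + size u.
  have HP : P <= P * n by rewrite leq_pmulr.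
  pose m := b + P * n - P.
  exists (nseq m false). apply: (@fits_lang x n _ a Hn) => i.
  rewrite !size_cat size_nseq => iu.
  rewrite nth_cat. case: ltnP => i1; first exact: Ha.
  rewrite nth_cat size_nseq. case: ltnP => i2; first by rewrite nth_nseq i2.
  have := Hb (i - size u - m).
  have -> : a + i = P * n + (b + (i - size u - m)).
    rewrite /m. move: HP. rewrite /P. set q := (a + size u) * n. lia.
  rewrite perk //. apply. lia.
-
  move=> Hsx Hmix.
  have Lu : in_lang (hered X) (mkseq x n).
    apply: (@fits_lang x n _ 0 Hn) => i. rewrite size_mkseq => iu.
    by rewrite nth_mkseq.
  have [N HN] := Hmix _ _ Lu Lu.
  have HNn : N <= N * n by rewrite leq_pmulr.
  have [v [sv Lv]] := HN (N * n + 1) ltac:(lia).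
  have [a Ha] := @lang_fits x n _ Lv.
  have K1 : forall i, i < n -> x i <= x (a + i).
    move=> i iu. have := Ha i. rewrite nth_cat size_mkseq iu nth_mkseq //.
    apply. rewrite !size_cat size_mkseq. lia.
  have K2 : forall i, i < n -> x i <= x ((a + n + (N * n + 1)) + i).
    move=> i iu. have := Ha (n + (N * n + 1) + i).
    rewrite nth_cat size_mkseq. have -> : n + (N * n + 1) + i < n = false by lia.
    rewrite nth_cat sv.
    have -> : n + (N * n + 1) + i - n < N * n + 1 = false by lia.
    have -> : n + (N * n + 1) + i - n - (N * n + 1) = i by lia.
    rewrite nth_mkseq // -!addnA. apply. rewrite !size_cat size_mkseq sv. lia.
  have E1 := @key x n Hn Hp _ K1.
  have E2 := @key x n Hn Hp _ K2.
  apply: Hsx. apply: functional_extensionality => t.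
  rewrite /shift -(E2 t).
  have -> : a + n + (N * n + 1) + t = a + (n + (N * n + (1 + t))) by lia.
  by rewrite E1 per1 // perk.
Qed.
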